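(* Let $X=(\mathbb{R}^n,S)$ and $A=(\mathbb{R}^m,T)$ be indecomposable topological Alexander quandles, where $S$ and $T$ are continuous additive automorphisms of $\mathbb{R}^n$ and $\mathbb{R}^m$. Then $H^1_{TC}(X,A)$ is (as a group under pointwise addition) equal to $\{\,x\mapsto F(x)+a \;:\; a\in\mathbb{R}^m,\ F:\mathbb{R}^n\to\mathbb{R}^m \text{ linear},\ FS=TF\,\}$.
   Context: A topological Alexander quandle $(A,T)$ is a topological abelian group $A$ with a continuous group automorphism $T$ and operation $a*b=Ta+(1-T)b$. A quandle is indecomposable if the group generated by the right multiplications $x\mapsto x*y$ acts transitively; for $(\mathbb{R}^n,S)$ this is equivalent to $I-S$ being invertible. For a topological quandle $X$ and topological Alexander quandle $(A,T)$, $H^1_{TC}(X,A)$ is the group (pointwise addition) of continuous quandle homomorphisms $\eta:X\to A$, i.e. continuous maps with $\eta(x*y)=T\eta(x)+(1-T)\eta(y)$ for all $x,y$. *)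

(* Defs.v *)
From Stdlib Require Import Reals.
From mathcomp Require Import ssreflect ssrfun ssrbool eqtype ssrnat fintype.

Set Implicit Arguments.
Unset Strict Implicit.

Local Open Scope R_scope.

Definition vec (n : nat) := 'I_n -> R.

Definition vadd {n} (x y : vec n) : vec n := fun i => x i + y i.
Definition vsub {n} (x y : vec n) : vec n := fun i => x i - y i.
Definition vscale {n} (c : R) (x : vec n) : vec n := fun i => c * x i.

Definition vcontinuous {n m} (f : vec n -> vec m) : Prop :=
  forall (x : vec n) (eps : R), 0 < eps ->
    exists delta, 0 < delta /\
      forall y : vec n, (forall i, Rabs (y i - x i) < delta) ->
        forall j, Rabs (f y j - f x j) < eps.

Definition additive {n m} (f : vec n -> vec m) : Prop :=
  forall x y, f (vadd x y) = vadd (f x) (f y).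

Definition Rlinear {n m} (f : vec n -> vec m) : Prop :=
  additive f /\ forall (c : R) x, f (vscale c x) = vscale c (f x).

Definition cont_automorphism {n} (S : vec n -> vec n) : Prop :=
  additive S /\ vcontinuous S /\
  exists Sinv : vec n -> vec n, (forall x, Sinv (S x) = x) /\ (forall x, S (Sinv x) = x).

Definition alex {n} (T : vec n -> vec n) (a b : vec n) : vec n :=
  vadd (T a) (vsub b (T b)).

(* orbit of x under the group generated by the right multiplications
   R_y : z |-> z * y  (and their inverses) *)
Inductive inner_reach {n} (S : vec n -> vec n) (x : vec n) : vec n -> Prop :=
  | ir_refl : inner_reach S x x
  | ir_mul : forall z y, inner_reach S x z -> inner_reach S x (alex S z y)
  | ir_inv : forall z y w, inner_reach S x z -> alex S w y = z -> inner_reach S x w.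

Definition indecomposable {n} (S : vec n -> vec n) : Prop :=
  forall x z : vec n, inner_reach S x z.

(* H^1_TC(X, A): continuous quandle homomorphisms X -> A *)
Definition H1TC {n m} (S : vec n -> vec n) (T : vec m -> vec m)
  (eta : vec n -> vec m) : Prop :=
  vcontinuous eta /\
  forall x y, eta (alex S x y) = alex T (eta x) (eta y).

(* Main.v *)
Require Import Defs.
From Stdlib Require Import Reals Lra ZArith FunctionalExtensionality.
From mathcomp Require Import ssreflect ssrfun ssrbool eqtype ssrnat fintype seq.

Local Open Scope R_scope.

Definition v0 {n} : vec n := fun _ => 0.

Lemma vext {n} (x y : vec n) : (forall i, x i = y i) -> x = y.
Proof. intro H; apply functional_extensionality; exact H. Qed.

Lemma add_0 {n m} {f : vec n -> vec m} : additive f -> f v0 = v0.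
Proof.
  intro H.
  have E : vadd (@v0 n) v0 = v0 by apply vext => i; rewrite /vadd /v0; lra.
  apply vext => i. have Hi := f_equal (fun g => g i) (H v0 v0).
  rewrite E /= in Hi. unfold vadd in Hi. change (f v0 i = 0). lra.
Qed.

Lemma add_sub {n m} {f : vec n -> vec m} : additive f ->
  forall x y, f (vsub x y) = vsub (f x) (f y).
Proof.
  move=> H x y.
  have E : x = vadd (vsub x y) y by apply vext => i; rewrite /vadd /vsub; lra.
  have Hx := H (vsub x y) y. rewrite -E in Hx.
  apply vext => i. have Hi := f_equal (fun g => g i) Hx.
  rewrite /= in Hi. unfold vadd in Hi. change (f (vsub x y) i = f x i - f y i). lra.
Qed.

Lemma hom_nat {n m} {f : vec n -> vec m} : additive f ->
  forall (k : nat) x, f (vscale (INR k) x) = vscale (INR k) (f x).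
Proof.
  move=> H; elim => [|k IH] x.
  - have E : vscale (INR 0) x = v0 by apply vext => i; rewrite /vscale /v0 /=; lra.
    rewrite E (add_0 H). apply vext => i; rewrite /vscale /v0 /=; lra.
  - have E : vscale (INR k.+1) x = vadd (vscale (INR k) x) x
      by apply vext => i; rewrite /vscale /vadd S_INR; lra.
    rewrite E H IH. apply vext => i; rewrite /vscale /vadd S_INR; lra.
Qed.

Lemma hom_neg {n m} {f : vec n -> vec m} : additive f -> forall c,
  (forall x, f (vscale c x) = vscale c (f x)) ->
  (forall x, f (vscale (- c) x) = vscale (- c) (f x)).
Proof.
  move=> H c Hc x.
  have E : vscale (-c) x = vsub v0 (vscale c x) by apply vext => i; rewrite /vscale /vsub /v0; lra.
  rewrite E (add_sub H) (add_0 H) Hc. apply vext => i; rewrite /vscale /vsub /v0; lra.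
Qed.

Lemma hom_Z {n m} {f : vec n -> vec m} : additive f ->
  forall (z : Z) x, f (vscale (IZR z) x) = vscale (IZR z) (f x).
Proof.
  move=> H z.
  have P : forall p, IZR (Zpos p) = INR (Pos.to_nat p)
    by move=> p; rewrite INR_IZR_INZ positive_nat_Z.
  case: z => [|p|p] x.
  - by rewrite -[IZR 0]/(INR 0) hom_nat.
  - by rewrite P hom_nat.
  - by rewrite -Pos2Z.opp_pos opp_IZR; apply hom_neg => // y; rewrite P hom_nat.
Qed.

Lemma hom_Q {n m} {f : vec n -> vec m} : additive f ->
  forall (p q : Z) x, IZR q <> 0 ->
  f (vscale (IZR p / IZR q) x) = vscale (IZR p / IZR q) (f x).
Proof.
  move=> H p q x Hq.
  set y := vscale (/ IZR q) x.
  have E1 : x = vscale (IZR q) y by apply vext => i; rewrite /y /vscale; field.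
  have E2 : vscale (IZR p / IZR q) x = vscale (IZR p) y
    by apply vext => i; rewrite /y /vscale; field.
  rewrite E2 hom_Z //.
  have Hx : f x = vscale (IZR q) (f y) by rewrite {1}E1 hom_Z.
  apply vext => i. have Hi := f_equal (fun g => g i) Hx.
  rewrite /= /vscale in Hi. rewrite /vscale Hi. field. done.
Qed.

Lemma fin_bound_seq {n} (g : 'I_n -> R) (l : seq 'I_n) :
  0 <= foldr (fun i acc => Rabs (g i) + acc) 0 l /\
  forall i, i \in l -> Rabs (g i) <= foldr (fun i acc => Rabs (g i) + acc) 0 l.
Proof.
  elim: l => [|a l [H0 H1]] /=.
  - split; [lra| by move=> i; rewrite in_nil].
  - split. have := Rabs_pos (g a); lra.
    move=> i; rewrite in_cons => /orP [/eqP -> | Hi].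
    + lra.
    + have := H1 i Hi. have := Rabs_pos (g a). lra.
Qed.

Lemma fin_bound {n} (g : 'I_n -> R) : exists B, 0 <= B /\ forall i, Rabs (g i) <= B.
Proof.
  have [H0 H1] := fin_bound_seq g (ord_enum n).
  eexists; split; [exact H0|]. move=> i; apply H1; exact: mem_ord_enum.
Qed.
Definition ev {n} (i : 'I_n) : vec n := fun k => if k == i then 1 else 0.

Definition sumv {n m} (l : seq 'I_n) (f : 'I_n -> vec m) : vec m :=
  foldr (fun i acc => vadd (f i) acc) v0 l.

Lemma sumv_pt {n m} (l : seq 'I_n) (f : 'I_n -> vec m) k :
  sumv l f k = foldr (fun i acc => f i k + acc) 0 l.
Proof. elim: l => [|a l IH] //=. by rewrite -IH. Qed.

Lemma decomp_seq {n} (v : vec n) (l : seq 'I_n) k : uniq l ->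
  foldr (fun i acc => vscale (v i) (ev i) k + acc) 0 l = if k \in l then v k else 0.
Proof.
  elim: l => [|a l IH] //= /andP [Hn Hu]. rewrite IH // in_cons /vscale /ev.
  case: (eqVneq k a) => [->|Hne] /=.
  - rewrite (negbTE Hn). lra.
  - case: (k \in l); lra.
Qed.

Lemma decomp {n} (v : vec n) : v = sumv (ord_enum n) (fun i => vscale (v i) (ev i)).
Proof.
  apply vext => k. rewrite sumv_pt decomp_seq ?ord_enum_uniq // mem_ord_enum //.
Qed.

Lemma lin_sumv {n m} {F : vec n -> vec m} : additive F ->
  forall (l : seq 'I_n) f, F (sumv l f) = sumv l (fun i => F (f i)).
Proof.
  move=> H; elim => [|a l IH] f /=; first exact: add_0.
  by rewrite H IH.
Qed.

Lemma lin_bound_seq {n m} {F : vec n -> vec m} : Rlinear F ->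
  forall (l : seq 'I_n) v d, (forall i, Rabs (v i) <= d) -> forall j,
  Rabs (sumv l (fun i => F (vscale (v i) (ev i))) j)
    <= d * foldr (fun i acc => Rabs (F (ev i) j) + acc) 0 l.
Proof.
  move=> [Ha Hh]; elim => [|a l IH] v d Hv j /=.
  - rewrite /v0 Rabs_R0. lra.
  - rewrite /vadd Hh. change (vscale (v a) (F (ev a)) j) with (v a * F (ev a) j).
    have h1 := Rabs_triang (v a * F (ev a) j) (sumv l (fun i => F (vscale (v i) (ev i))) j).
    have h2 := IH v d Hv j.
    rewrite Rabs_mult in h1.
    have h3 := Hv a. have h4 := Rabs_pos (v a). have h5 := Rabs_pos (F (ev a) j).
    nra.
Qed.

Lemma lin_cont {n m} {F : vec n -> vec m} : Rlinear F -> vcontinuous F.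
Proof.
  move=> HF x eps He.
  have [K [HK0 HK]] := fin_bound (fun j => foldr (fun i acc => Rabs (F (ev i) j) + acc) 0 (ord_enum n)).
  exists (eps / (K + 1)). split.
  { apply Rdiv_lt_0_compat; lra. }
  move=> y Hy j.
  have Ha := HF.1.
  have E : F y j - F x j = F (vsub y x) j by rewrite (add_sub Ha).
  rewrite E (decomp (vsub y x)) (lin_sumv Ha).
  have Hb := lin_bound_seq HF (ord_enum n) (vsub y x) (eps / (K+1))
     ltac:(move=> i; apply Rlt_le; exact: Hy) j.
  have HKj := Rle_trans _ _ _ (Rle_abs _) (HK j). simpl in HKj.
  have Hd : 0 < eps / (K+1) by apply Rdiv_lt_0_compat; lra.
  have Hk : eps / (K + 1) * (K + 1) = eps by field; lra.
  apply: Rle_lt_trans; first exact: Hb.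
  have : eps / (K + 1) * foldr (fun i acc => Rabs (F (ev i) j) + acc) 0 (ord_enum n)
     <= eps / (K+1) * K by apply Rmult_le_compat_l; lra.
  nra.
Qed.
Lemma homog_cont {n m} {f : vec n -> vec m} : additive f -> vcontinuous f ->
  forall c x, f (vscale c x) = vscale c (f x).
Proof.
  move=> Ha Hc c x. apply vext => j. change (f (vscale c x) j = c * f x j).
  destruct (Req_dec (f (vscale c x) j) (c * f x j)) as [|Hne]; first done.
  exfalso.
  have He : 0 < Rabs (f (vscale c x) j - c * f x j) by apply Rabs_pos_lt; lra.
  set e := Rabs (f (vscale c x) j - c * f x j) in He.
  have [d [Hd Hy]] := Hc (vscale c x) (e/2) ltac:(lra).
  have [B [HB0 HB]] := fin_bound x.
  have h1 : 0 <= B / d by apply Rmult_le_pos; [lra| apply Rlt_le, Rinv_0_lt_compat; lra].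
  have h2 : 0 <= 2 * Rabs (f x j) / e
    by apply Rmult_le_pos; [have := Rabs_pos (f x j); lra| apply Rlt_le, Rinv_0_lt_compat; lra].
  have [HK1 _] := archimed (B / d + 2 * Rabs (f x j) / e + 1).
  set Q := IZR (up (B / d + 2 * Rabs (f x j) / e + 1)) in HK1.
  have HQ : 0 < Q by lra.
  have HQd : B < Q * d.
  { have : B / d * d < Q * d by apply Rmult_lt_compat_r; lra.
    have : B / d * d = B by field; lra. lra. }
  have HQe : 2 * Rabs (f x j) < Q * e.
  { have : 2 * Rabs (f x j) / e * e < Q * e by apply Rmult_lt_compat_r; lra.
    have : 2 * Rabs (f x j) / e * e = 2 * Rabs (f x j) by field; lra. lra. }
  have [Hp1 Hp2] := archimed (c * Q).
  set P := IZR (up (c * Q)) in Hp1 Hp2.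
  have Hfr := hom_Q Ha (up (c * Q)) (up (B / d + 2 * Rabs (f x j) / e + 1)) x ltac:(fold Q; lra).
  fold P Q in Hfr.
  set iQ := / Q.
  have HiQ : Q * iQ = 1 by rewrite /iQ; field; lra.
  have HiQp : 0 < iQ by apply Rinv_0_lt_compat.
  have Er : P / Q - c = (P - c * Q) * iQ by rewrite /iQ; field; lra.
  have Hclose : forall i, Rabs (vscale (P / Q) x i - vscale c x i) < d.
  { move=> i. rewrite /vscale.
    have -> : P / Q * x i - c * x i = (P - c * Q) * iQ * x i by rewrite -Er; ring.
    rewrite Rabs_mult Rabs_mult (Rabs_right iQ); last lra.
    rewrite (Rabs_right (P - c * Q)); last lra.
    have hb := HB i. have ha := Rabs_pos (x i).
    have k1 : (P - c * Q) * Rabs (x i) <= B by nra.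
    have k2 : (P - c * Q) * Rabs (x i) * iQ <= B * iQ by apply Rmult_le_compat_r; lra.
    have k3 : B * iQ < Q * d * iQ by apply Rmult_lt_compat_r; lra.
    have k4 : Q * d * iQ = d by rewrite (Rmult_comm Q) Rmult_assoc HiQ; ring.
    nra. }
  have H1 := Hy _ Hclose j.
  rewrite Hfr in H1. change (vscale (P / Q) (f x) j) with (P / Q * f x j) in H1.
  have H2 : Rabs (P / Q * f x j - c * f x j) < e / 2.
  { have -> : P / Q * f x j - c * f x j = (P - c * Q) * iQ * f x j by rewrite -Er; ring.
    rewrite Rabs_mult Rabs_mult (Rabs_right iQ); last lra.
    rewrite (Rabs_right (P - c * Q)); last lra.
    have ha := Rabs_pos (f x j).
    have k1 : (P - c * Q) * Rabs (f x j) <= Rabs (f x j) by nra.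
    have k2 : (P - c * Q) * Rabs (f x j) * iQ <= Rabs (f x j) * iQ by apply Rmult_le_compat_r; lra.
    have k3 : 2 * Rabs (f x j) * iQ < Q * e * iQ by apply Rmult_lt_compat_r; lra.
    have k4 : Q * e * iQ = e by rewrite (Rmult_comm Q) Rmult_assoc HiQ; ring.
    nra. }
  have H3 := Rabs_triang (f (vscale c x) j - P / Q * f x j) (P / Q * f x j - c * f x j).
  rewrite Rabs_minus_sym in H1.
  have : e <= Rabs (f (vscale c x) j - P / Q * f x j) + Rabs (P / Q * f x j - c * f x j).
  { rewrite /e. have -> : f (vscale c x) j - c * f x j =
      f (vscale c x) j - P / Q * f x j + (P / Q * f x j - c * f x j) by ring. exact H3. }
  lra.
Qed.
Lemma reach_img {n} (S : vec n -> vec n) x z : additive S -> inner_reach S x z ->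
  exists y, z = vadd x (vsub y (S y)).
Proof.
  move=> HS H. induction H as [|z y H [w Hz]|z y w H [w0 Hz] Hw].
  - exists v0. apply vext => i. rewrite /vadd /vsub (add_0 HS) /v0. lra.
  - exists (vadd (vsub w z) y).
    rewrite (HS (vsub w z) y) (add_sub HS w z).
    apply vext => i. have Ez := f_equal (fun g => g i) Hz.
    rewrite /alex /vadd /vsub /= in Ez *. lra.
  - exists (vadd (vsub w0 y) w).
    rewrite (HS (vsub w0 y) w) (add_sub HS w0 y).
    apply vext => i. have Ez := f_equal (fun g => g i) Hz.
    have Ew := f_equal (fun g => g i) Hw.
    rewrite /alex /vadd /vsub /= in Ez Ew *. lra.
Qed.

Theorem mainTheorem2 (n m : nat) (S : vec n -> vec n) (T : vec m -> vec m) :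
  cont_automorphism S -> cont_automorphism T ->
  indecomposable S -> indecomposable T ->
  forall eta : vec n -> vec m,
    H1TC S T eta <->
    exists (F : vec n -> vec m) (a : vec m),
      Rlinear F /\ (forall x, F (S x) = T (F x)) /\
      (forall x, eta x = vadd (F x) a).
Proof.
  move=> [HSa [HSc [Sinv [HS1 HS2]]]] [HTa [HTc _]] HSind _ eta; split.
  - move=> [Hc Hh].
    pose F := fun x => vsub (eta x) (eta v0).
    have FS : forall x, F (S x) = T (F x).
    { move=> x. have H := Hh x v0.
      have E : alex S x v0 = S x.
      { apply vext => i. rewrite /alex /vadd /vsub (add_0 HSa) /v0. lra. }
      rewrite E in H. rewrite /F H (add_sub HTa).
      apply vext => i. rewrite /alex /vadd /vsub. lra. }
    have Foms : forall y, F (vsub y (S y)) = vsub (F y) (T (F y)).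
    { move=> y. have H := Hh v0 y.
      have E : alex S v0 y = vsub y (S y).
      { apply vext => i. rewrite /alex /vadd /vsub (add_0 HSa) /v0. lra. }
      rewrite E in H. rewrite /F H (add_sub HTa).
      apply vext => i. rewrite /alex /vadd /vsub. lra. }
    have Fadd : additive F.
    { move=> u v. have [y Hy] := @reach_img _ S v0 v HSa (HSind v0 v).
      have Ev : v = vsub y (S y) by rewrite Hy; apply vext => i; rewrite /vadd /v0; lra.
      have H := Hh (Sinv u) y.
      have E : alex S (Sinv u) y = vadd u v by rewrite /alex HS2 -Ev.
      rewrite E in H.
      have E1 := FS (Sinv u). rewrite HS2 in E1.
      have E2 := Foms y. rewrite -Ev in E2.
      rewrite E1 E2 /F H !(add_sub HTa).
      apply vext => i. rewrite /alex /vadd /vsub. lra. }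
    have Fc : vcontinuous F.
    { move=> x eps He. have [d [Hd Hy]] := Hc x eps He.
      exists d; split => // y Hyx j. rewrite /F /vsub.
      have -> : eta y j - eta v0 j - (eta x j - eta v0 j) = eta y j - eta x j by ring.
      exact: Hy. }
    exists F, (eta v0). split; [split; [exact Fadd| exact: homog_cont]|].
    split; first exact FS.
    move=> x. apply vext => i. rewrite /F /vadd /vsub. lra.
  - move=> [F [a [[Fa Fh] [FS E]]]]. split.
    + move=> x eps He. have [d [Hd Hy]] := lin_cont (conj Fa Fh) x eps He.
      exists d; split => // y Hyx j. rewrite !E /vadd.
      have -> : F y j + a j - (F x j + a j) = F y j - F x j by ring.
      exact: Hy.
    + move=> x y. rewrite !E /alex Fa (add_sub Fa) !FS !HTa.
      apply vext => i. rewrite /vadd /vsub. lra.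
Qed.
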